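(* Let $X$ be the class of continuous functions $f:[0,1]\to\mathbb{R}$ with $f(0),f(1)\in\mathbb{Z}$. Then each of the two families of operators $\widetilde{B}_n$, $n\in\mathbb{N}_+$, and $\widehat{B}_n$, $n\in\mathbb{N}_+$, uniformly asymptotically preserves convexity on $X$.
   Context: For $n\in\mathbb{N}_+$ and $f:[0,1]\to\mathbb{R}$, define $\widetilde{B}_n(f)(x):=\sum_{k=0}^n \left[f\left(\frac{k}{n}\right)\binom{n}{k}\right]x^k(1-x)^{n-k}$, where $[\alpha]$ is the largest integer $\le\alpha$, and $\widehat{B}_n(f)(x):=\sum_{k=0}^n \left\langle f\left(\frac{k}{n}\right)\binom{n}{k}\right\rangle x^k(1-x)^{n-k}$, where $\langle\alpha\rangle$ is the integer nearest to $\alpha$ (when $\alpha$ is a half-integer, $\langle\alpha\rangle$ may be either of the two neighbouring integers, chosen arbitrarily; the result holds for any such choice). Definition: a family of operators $L_n:X\to X$, $n\in\mathbb{N}_+$, on a class $X$ of functions defined on $I\subseteq\mathbb{R}$ uniformly asymptotically preserves convexity on $X$ if there exist $n_0\in\mathbb{N}_+$ and functions $\varepsilon_n,\eta_n:I\to\mathbb{R}$, $n\ge n_0$, such that: (i) $\varepsilon_n\to 0$ and $\eta_n\to 0$ uniformly on $I$ as $n\to\infty$; (ii) whenever $f\in X$ is convex on $I$, $L_n(f)+\varepsilon_n$ is convex on $I$ for all $n\ge n_0$; (iii) whenever $f\in X$ is concave on $I$, $L_n(f)+\eta_n$ is concave on $I$ for all $n\ge n_0$. *)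

(* Defs.v *)
From Stdlib Require Import Reals Lra Lia ZArith.
Open Scope R_scope.

(* largest integer <= x  (Int_part x = up x - 1, and x < up x <= x + 1) *)
Definition floorR (x : R) : R := IZR (Int_part x).

Definition nearest_int_choice (rnd : R -> Z) : Prop :=
  forall x : R, Rabs (x - IZR (rnd x)) <= 1 / 2.

Definition Bround (g : R -> R) (n : nat) (f : R -> R) (x : R) : R :=
  sum_f_R0 (fun k => g (f (INR k / INR n) * C n k) * x ^ k * (1 - x) ^ (n - k)) n.

Definition Btilde (n : nat) (f : R -> R) : R -> R := Bround floorR n f.

Definition Bhat (rnd : R -> Z) (n : nat) (f : R -> R) : R -> R :=
  Bround (fun a => IZR (rnd a)) n f.

Definition in01 (x : R) : Prop := 0 <= x <= 1.

Definition continuous_on01 (f : R -> R) : Prop :=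
  forall x, in01 x -> forall eps, 0 < eps ->
    exists delta, 0 < delta /\
      forall y, in01 y -> Rabs (y - x) < delta -> Rabs (f y - f x) < eps.

Definition is_integer (r : R) : Prop := exists z : Z, r = IZR z.

Definition classX (f : R -> R) : Prop :=
  continuous_on01 f /\ is_integer (f 0) /\ is_integer (f 1).

Definition convex_on01 (f : R -> R) : Prop :=
  forall x y t, in01 x -> in01 y -> 0 <= t <= 1 ->
    f (t * x + (1 - t) * y) <= t * f x + (1 - t) * f y.

Definition concave_on01 (f : R -> R) : Prop :=
  forall x y t, in01 x -> in01 y -> 0 <= t <= 1 ->
    t * f x + (1 - t) * f y <= f (t * x + (1 - t) * y).

Definition unif_cv_zero01 (e : nat -> R -> R) : Prop :=
  forall eps, 0 < eps -> exists N : nat,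
    forall n, (N <= n)%nat -> forall x, in01 x -> Rabs (e n x) < eps.

Definition unif_asymp_preserves_convexity (L : nat -> (R -> R) -> (R -> R)) : Prop :=
  (forall n f, (1 <= n)%nat -> classX f -> classX (L n f)) /\
  exists (n0 : nat) (eps eta : nat -> R -> R),
    (1 <= n0)%nat /\
    unif_cv_zero01 eps /\ unif_cv_zero01 eta /\
    (forall f, classX f -> convex_on01 f ->
       forall n, (n0 <= n)%nat -> convex_on01 (fun x => L n f x + eps n x)) /\
    (forall f, classX f -> concave_on01 f ->
       forall n, (n0 <= n)%nat -> concave_on01 (fun x => L n f x + eta n x)).

(* Main.v *)
Require Import Defs.
From Stdlib Require Import Reals Lra Lia.
Open Scope R_scope.

Definition Bern (m:nat) (u:nat->R) (x:R) : R :=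
  sum_f_R0 (fun k => u k * C m k * x^k * (1-x)^(m-k)) m.

Lemma dpl_ext f g x l : (forall y, f y = g y) -> derivable_pt_lim f x l -> derivable_pt_lim g x l.
Proof.
  intros H D eps He. destruct (D eps He) as [d Hd]. exists d. intros h H1 H2.
  rewrite <- !H. apply Hd; auto.
Qed.

Lemma d_term k p x : derivable_pt_lim (fun y => y^k * (1-y)^p) x
   (INR k * x^(pred k) * (1-x)^p + x^k * (INR p * (1-x)^(pred p) * (-1))).
Proof.
  apply derivable_pt_lim_mult. apply derivable_pt_lim_pow.
  apply (derivable_pt_lim_comp (fun y => 1 - y) (fun y => y^p)).
  - replace (-1) with (0 - 1) by ring. apply derivable_pt_lim_minus.
    apply derivable_pt_lim_const. apply derivable_pt_lim_id.
  - apply derivable_pt_lim_pow.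
Qed.

Lemma d_sum (F : nat -> R -> R) (F' : nat -> R) N x :
  (forall k, (k<=N)%nat -> derivable_pt_lim (F k) x (F' k)) ->
  derivable_pt_lim (fun y => sum_f_R0 (fun k => F k y) N) x (sum_f_R0 F' N).
Proof.
  induction N; intros H; simpl.
  - apply H; lia.
  - apply (derivable_pt_lim_plus (fun y => sum_f_R0 (fun k => F k y) N) (F (S N))).
    apply IHN; intros; apply H; lia. apply H; lia.
Qed.

Lemma C_S_S m i : (i <= m)%nat -> C (S m) (S i) * INR (S i) = INR (S m) * C m i.
Proof.
  intros Hi. rewrite pascal_step3 by lia. rewrite pascal_step2 by lia.
  assert (INR (S m - i) <> 0). { apply not_0_INR. lia. }
  assert (INR (S i) <> 0). { apply not_0_INR. lia. }
  field. auto.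
Qed.

Lemma C_S_l m i : (i <= m)%nat -> C (S m) i * INR (S m - i) = INR (S m) * C m i.
Proof.
  intros Hi. rewrite pascal_step2 by lia.
  assert (INR (S m - i) <> 0). { apply not_0_INR. lia. }
  field. auto.
Qed.

Definition D1 (u : nat -> R) j := u (S j) - u j.

Lemma scal_sum_l (F : nat -> R) a N : sum_f_R0 (fun i => a * F i) N = a * sum_f_R0 F N.
Proof. induction N; simpl; [ring | rewrite IHN; ring]. Qed.

Lemma dpl_val f x l l' : derivable_pt_lim f x l -> l = l' -> derivable_pt_lim f x l'.
Proof. intros; subst; auto. Qed.

Lemma Bern_deriv m u x :
  derivable_pt_lim (Bern (S m) u) x (INR (S m) * Bern m (D1 u) x).
Proof.
  unfold Bern.
  eapply dpl_val.
  { eapply dpl_ext; [ | apply (d_sum (fun k y => (u k * C (S m) k) * (y^k * (1-y)^(S m - k))))].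
    - intros y. apply sum_eq. intros; ring.
    - intros k Hk. apply derivable_pt_lim_scal. apply d_term. }
  set (A := fun k => u k * C (S m) k * INR k * x^(pred k) * (1-x)^(S m - k)).
  set (B := fun k => u k * C (S m) k * x^k * INR (S m - k) * (1-x)^(pred (S m - k))).
  rewrite (sum_eq _ (fun k => A k - B k)) by (intros; unfold A, B; ring).
  rewrite minus_sum. rewrite (decomp_sum A (S m)) by lia. rewrite tech5.
  simpl pred.
  assert (HA0 : A 0%nat = 0) by (unfold A; simpl; ring).
  assert (HB : B (S m) = 0) by (unfold B; rewrite Nat.sub_diag; simpl; ring).
  rewrite HA0, HB.
  rewrite (sum_eq (fun i => A (S i)) (fun i => INR (S m) * (u (S i) * C m i * x^i * (1-x)^(m-i)))).
  2:{ intros i Hi. unfold A. simpl pred. replace (S m - S i)%nat with (m - i)%nat by lia.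
      transitivity (u (S i) * (C (S m) (S i) * INR (S i)) * x^i * (1-x)^(m-i)); [ring| rewrite C_S_S by exact Hi; ring]. }
  rewrite (sum_eq B (fun i => INR (S m) * (u i * C m i * x^i * (1-x)^(m-i)))).
  2:{ intros i Hi. unfold B. replace (S m - i)%nat with (S (m - i)) by lia. simpl pred.
      transitivity (u i * (C (S m) i * INR (S m - i)) * x^i * (1-x)^(m-i)); [replace (S m - i)%nat with (S (m - i)) by lia; ring| rewrite C_S_l by exact Hi; ring]. }
  rewrite !scal_sum_l. unfold D1.
  rewrite (sum_eq (fun k => (u (S k) - u k) * C m k * x ^ k * (1 - x) ^ (m - k))
     (fun k => (u (S k) * C m k * x ^ k * (1 - x) ^ (m - k)) - (u k * C m k * x ^ k * (1 - x) ^ (m - k))))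
     by (intros; ring).
  rewrite minus_sum. ring.
Qed.

Lemma convex_from_d2 g g' g'' : (forall x, derivable_pt_lim g x (g' x)) ->
  (forall x, derivable_pt_lim g' x (g'' x)) -> (forall x, in01 x -> 0 <= g'' x) -> convex_on01 g.
Proof.
  intros D1 D2 Pos.
  assert (mono : forall a b, 0 <= a -> b <= 1 -> a < b -> g' a <= g' b).
  { intros a b Ha Hb Hab. destruct (MVT_cor2 g' g'' a b Hab) as [c [Hc1 Hc2]].
    intros; apply D2. assert (0 <= g'' c) by (apply Pos; unfold in01; lra). nra. }
  assert (core : forall x y s, 0 <= x -> x < y -> y <= 1 -> 0 <= s <= 1 ->
            g (s * x + (1 - s) * y) <= s * g x + (1 - s) * g y).
  { intros x y s Hx Hxy Hy Hs.
    destruct (Req_dec s 0) as [E|E]. { subst. replace (0 * x + (1 - 0) * y) with y by ring. lra. }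
    destruct (Req_dec s 1) as [E'|E']. { subst. replace (1 * x + (1 - 1) * y) with x by ring. lra. }
    set (z := s * x + (1 - s) * y).
    assert (Hz1 : x < z) by (unfold z; nra). assert (Hz2 : z < y) by (unfold z; nra).
    destruct (MVT_cor2 g g' x z Hz1) as [c1 [E1 Hc1]]. intros; apply D1.
    destruct (MVT_cor2 g g' z y Hz2) as [c2 [E2 Hc2]]. intros; apply D1.
    assert (M : g' c1 <= g' c2) by (apply mono; lra).
    assert (P : 0 <= s * (1 - s) * (y - x)) by (apply Rmult_le_pos; nra).
    assert (s * (g z - g x) <= (1 - s) * (g y - g z)).
    { rewrite E1, E2. replace (z - x) with ((1-s)*(y-x)) by (unfold z; ring).
      replace (y - z) with (s*(y-x)) by (unfold z; ring).
      replace (s * (g' c1 * ((1 - s) * (y - x)))) with (s * (1 - s) * (y - x) * g' c1) by ring.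
      replace ((1 - s) * (g' c2 * (s * (y - x)))) with (s * (1 - s) * (y - x) * g' c2) by ring.
      apply Rmult_le_compat_l; auto. }
    lra. }
  intros x y t Hx Hy Ht. unfold in01 in *.
  destruct (Rtotal_order x y) as [H|[H|H]].
  - apply core; lra.
  - subst. replace (t * y + (1 - t) * y) with y by ring. lra.
  - replace (t * x + (1 - t) * y) with ((1 - t) * y + (1 - (1 - t)) * x) by ring.
    pose proof (core y x (1 - t)). lra.
Qed.

Lemma C_pos m k : 0 < C m k.
Proof.
  unfold C. apply Rdiv_lt_0_compat. apply lt_0_INR, Factorial.lt_O_fact.
  apply Rmult_lt_0_compat; apply lt_0_INR, Factorial.lt_O_fact.
Qed.

Lemma sum_nonneg (F : nat -> R) N : (forall k, (k <= N)%nat -> 0 <= F k) -> 0 <= sum_f_R0 F N.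
Proof.
  induction N; intros H; simpl. apply H; lia.
  apply Rplus_le_le_0_compat. apply IHN; intros; apply H; lia. apply H; lia.
Qed.

Lemma Bern_nonneg m w x : in01 x -> (forall j, (j <= m)%nat -> 0 <= w j) -> 0 <= Bern m w x.
Proof.
  intros [H0 H1] Hw. unfold Bern. apply sum_nonneg. intros k Hk.
  pose proof (C_pos m k). pose proof (Hw k Hk).
  apply Rmult_le_pos. apply Rmult_le_pos. apply Rmult_le_pos. auto. lra.
  apply pow_le; lra. apply pow_le; lra.
Qed.

Lemma Bern_convex n u : (2 <= n)%nat ->
  (forall j, (j + 2 <= n)%nat -> 0 <= u j - 2 * u (S j) + u (S (S j))) -> convex_on01 (Bern n u).
Proof.
  intros Hn Hu. destruct n as [|[|m]]; try lia.
  apply (convex_from_d2 _ (fun x => INR (S (S m)) * Bern (S m) (D1 u) x)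
          (fun x => INR (S (S m)) * (INR (S m) * Bern m (D1 (D1 u)) x))).
  - intros x. apply Bern_deriv.
  - intros x. apply (derivable_pt_lim_scal (Bern (S m) (D1 u))). apply Bern_deriv.
  - intros x Hx. apply Rmult_le_pos. apply pos_INR. apply Rmult_le_pos. apply pos_INR.
    apply Bern_nonneg; auto. intros j Hj. unfold D1.
    pose proof (Hu j ltac:(lia)). lra.
Qed.

Lemma Bern_plus n a b x : Bern n (fun k => a k + b k) x = Bern n a x + Bern n b x.
Proof. unfold Bern. rewrite <- plus_sum. apply sum_eq. intros; ring. Qed.

Lemma Bern_opp n a x : Bern n (fun k => - a k) x = - Bern n a x.
Proof.
  unfold Bern. replace (- sum_f_R0 (fun k => a k * C n k * x ^ k * (1 - x) ^ (n - k)) n)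
   with (-1 * sum_f_R0 (fun k => a k * C n k * x ^ k * (1 - x) ^ (n - k)) n) by ring.
  rewrite <- scal_sum_l. apply sum_eq. intros; ring.
Qed.

Lemma Bern_bound n G M x : in01 x -> (forall k, (k <= n)%nat -> Rabs (G k) <= M) -> Rabs (Bern n G x) <= M.
Proof.
  intros [H0 H1] HG. unfold Bern. eapply Rle_trans. apply sum_f_R0_triangle.
  eapply Rle_trans. apply (sum_Rle _ (fun k => M * (C n k * x^k * (1-x)^(n-k)))).
  { intros k Hk. pose proof (C_pos n k). pose proof (pow_le x k H0). pose proof (pow_le (1-x) (n-k) ltac:(lra)).
    rewrite !Rabs_mult. rewrite (Rabs_pos_eq (C n k)) by lra. rewrite (Rabs_pos_eq (x^k)) by lra.
    rewrite (Rabs_pos_eq ((1-x)^(n-k))) by lra.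
    pose proof (HG k Hk).
    assert (0 <= C n k * x^k * (1-x)^(n-k)) by (apply Rmult_le_pos; [apply Rmult_le_pos|]; lra).
    nra. }
  rewrite scal_sum_l. rewrite <- binomial. replace (x + (1 - x)) with 1 by ring. rewrite pow1. lra.
Qed.

Lemma C_n_0 n : C n 0 = 1.
Proof. unfold C. rewrite Nat.sub_0_r. simpl. pose proof (INR_fact_neq_0 n). field; auto. Qed.

Lemma C_n_n n : C n n = 1.
Proof. unfold C. rewrite Nat.sub_diag. simpl. pose proof (INR_fact_neq_0 n). field; auto. Qed.

Lemma C_n_1 n : (1 <= n)%nat -> C n 1 = INR n.
Proof. intros. rewrite pascal_step3 by lia. rewrite C_n_0. rewrite Nat.sub_0_r. simpl. field. Qed.

Lemma C_n_2 n : (2 <= n)%nat -> C n 2 = INR n * (INR n - 1) / 2.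
Proof. intros. rewrite pascal_step3 by lia. rewrite C_n_1 by lia. rewrite minus_INR by lia.
  simpl. field. Qed.

Lemma C_n_3 n : (3 <= n)%nat -> C n 3 = INR n * (INR n - 1) * (INR n - 2) / 6.
Proof. intros. rewrite pascal_step3 by lia. rewrite C_n_2 by lia. rewrite minus_INR by lia.
  simpl. field. Qed.

Lemma C_step n k : (S k <= n - k)%nat -> C n k <= C n (S k).
Proof.
  intros H. rewrite pascal_step3 by lia. pose proof (C_pos n k).
  assert (INR (S k) <= INR (n - k)) by (apply le_INR; lia).
  assert (0 < INR (S k)) by (apply lt_0_INR; lia).
  assert (1 <= INR (n - k) / INR (S k)).
  { apply (Rmult_le_reg_r (INR (S k))); auto. unfold Rdiv. rewrite Rmult_assoc, Rinv_l by lra. lra. }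
  nra.
Qed.

Lemma C_mono n a k : (a <= k)%nat -> (2 * k <= n)%nat -> C n a <= C n k.
Proof.
  induction k; intros H1 H2.
  - replace a with 0%nat by lia. lra.
  - destruct (Nat.eq_dec a (S k)). subst; lra.
    eapply Rle_trans. apply IHk; lia. apply C_step. lia.
Qed.

Lemma C_ge n a k : (a <= k)%nat -> (k + a <= n)%nat -> C n a <= C n k.
Proof.
  intros H1 H2. destruct (Compare_dec.le_lt_dec (2 * k) n).
  - apply C_mono; auto.
  - rewrite (pascal_step1 n k) by lia. apply C_mono; lia.
Qed.

Definition c3 n := 6 / (INR n * (INR n - 1) * (INR n - 2)).
Definition Gs n k := 2 * c3 n * INR k * (INR k - INR n) + 64 / INR n * ((1/2)^k + (1/2)^(n-k)).

Lemma inv_le a b : 0 < a -> a <= b -> 1 / b <= 1 / a.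
Proof. intros. unfold Rdiv. rewrite !Rmult_1_l. apply Rinv_le_contravar; auto. Qed.

Lemma inv_C_1 n k : (1<=k)%nat -> (k+1 <= n)%nat -> 1 / C n k <= 1 / INR n.
Proof.
  intros. rewrite <- C_n_1 by lia. apply inv_le. apply C_pos. apply C_ge; lia.
Qed.

Lemma inv_C_3 n k : (3<=k)%nat -> (k+3 <= n)%nat -> 1 / C n k <= c3 n.
Proof.
  intros. unfold c3. replace (6 / (INR n * (INR n - 1) * (INR n - 2))) with (1 / C n 3).
  apply inv_le. apply C_pos. apply C_ge; lia.
  rewrite C_n_3 by lia. assert (3 <= INR n) by (replace 3 with (INR 3) by (simpl; ring); apply le_INR; lia).
  field. repeat split; lra.
Qed.

Lemma c3_pos n : (3 <= n)%nat -> 0 < c3 n.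
Proof.
  intros. unfold c3. assert (3 <= INR n) by (replace 3 with (INR 3) by (simpl; ring); apply le_INR; lia).
  apply Rdiv_lt_0_compat. lra. apply Rmult_lt_0_compat. apply Rmult_lt_0_compat. all: lra.
Qed.

Lemma D2G n j : (j+2 <= n)%nat -> (3<=n)%nat ->
  Gs n j - 2 * Gs n (S j) + Gs n (S (S j)) = 4 * c3 n + 16 / INR n * ((1/2)^j + (1/2)^(n-2-j)).
Proof.
  intros H1 H2. unfold Gs. set (m := (n - 2 - j)%nat).
  replace (n - j)%nat with (S (S m)) by (unfold m; lia).
  replace (n - S j)%nat with (S m) by (unfold m; lia).
  replace (n - S (S j))%nat with m by (unfold m; lia).
  assert (0 < INR n) by (apply lt_0_INR; lia).
  rewrite !S_INR. simpl pow. field. lra.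
Qed.

Lemma abs_bd a A : Rabs a <= A -> -A <= a <= A.
Proof. unfold Rabs; destruct Rcase_abs; intros; lra. Qed.

Lemma half_pow m : (m <= 2)%nat -> 1/4 <= (1/2)^m.
Proof. intros. destruct m as [|[|[|]]]; simpl; lra || lia. Qed.

Lemma KEY n s d : (7 <= n)%nat ->
  (forall j, (j + 2 <= n)%nat -> 0 <= s j - 2 * s (S j) + s (S (S j))) ->
  (forall k, (k <= n)%nat -> Rabs (d k) <= 1 / INR n) ->
  (forall k, (3 <= k)%nat -> (k + 3 <= n)%nat -> Rabs (d k) <= c3 n) ->
  convex_on01 (Bern n (fun k => (s k - d k) + Gs n k)).
Proof.
  intros Hn Hs Hd1 Hd3. apply Bern_convex. lia. intros j Hj.
  pose proof (D2G n j Hj ltac:(lia)) as E.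
  pose proof (Hs j Hj) as S0.
  pose proof (c3_pos n ltac:(lia)).
  pose proof (pow_le (1/2) j ltac:(lra)). pose proof (pow_le (1/2) (n-2-j) ltac:(lra)).
  assert (0 < INR n) by (apply lt_0_INR; lia).
  assert (0 < 16 / INR n) by (apply Rdiv_lt_0_compat; lra).
  assert (Hr : 16 / INR n * (1/4) = 4 * (1 / INR n)) by (field; lra).
  destruct (Compare_dec.le_lt_dec j 2) as [Hj2|Hj2].
  - pose proof (half_pow j Hj2).
    pose proof (abs_bd _ _ (Hd1 j ltac:(lia))). pose proof (abs_bd _ _ (Hd1 (S j) ltac:(lia))).
    pose proof (abs_bd _ _ (Hd1 (S (S j)) ltac:(lia))).
    assert (16 / INR n * (1/4) <= 16 / INR n * (1/2)^j) by (apply Rmult_le_compat_l; lra).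
    nra.
  - destruct (Compare_dec.le_lt_dec (n-2-j) 2) as [Hj3|Hj3].
    + pose proof (half_pow _ Hj3).
      pose proof (abs_bd _ _ (Hd1 j ltac:(lia))). pose proof (abs_bd _ _ (Hd1 (S j) ltac:(lia))).
      pose proof (abs_bd _ _ (Hd1 (S (S j)) ltac:(lia))).
      assert (16 / INR n * (1/4) <= 16 / INR n * (1/2)^(n-2-j)) by (apply Rmult_le_compat_l; lra).
      nra.
    + pose proof (abs_bd _ _ (Hd3 j ltac:(lia) ltac:(lia))). pose proof (abs_bd _ _ (Hd3 (S j) ltac:(lia) ltac:(lia))).
      pose proof (abs_bd _ _ (Hd3 (S (S j)) ltac:(lia) ltac:(lia))).
      nra.
Qed.

Lemma frac_le a b c d : 0 < b -> 0 < d -> a * d <= c * b -> a / b <= c / d.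
Proof.
  intros. apply (Rmult_le_reg_r (b*d)). nra.
  replace (a/b*(b*d)) with (a*d) by (field; lra). replace (c/d*(b*d)) with (c*b) by (field; lra). auto.
Qed.

Lemma half_pow_le1 k : 0 <= (1/2)^k <= 1.
Proof. induction k; simpl; nra. Qed.

Lemma Gs_bound n k : (7 <= n)%nat -> (k <= n)%nat -> Rabs (Gs n k) <= 140 / INR n.
Proof.
  intros Hn Hk. unfold Gs.
  assert (HN : 7 <= INR n) by (replace 7 with (INR 7) by (simpl; ring); apply le_INR; lia).
  assert (HK : 0 <= INR k <= INR n) by (split; [apply pos_INR | apply le_INR; lia]).
  pose proof (c3_pos n ltac:(lia)).
  assert (Hc : c3 n * (INR n * INR n) <= 24 / INR n).
  { unfold c3. replace (6 / (INR n * (INR n - 1) * (INR n - 2)) * (INR n * INR n))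
      with ((6 * INR n) / ((INR n - 1) * (INR n - 2))) by (field; repeat split; lra).
    apply frac_le. apply Rmult_lt_0_compat; lra. lra. assert (0 <= (INR n - 7) * (INR n - 7)) by nra. nra. }
  pose proof (half_pow_le1 k). pose proof (half_pow_le1 (n - k)).
  assert (0 < 64 / INR n) by (apply Rdiv_lt_0_compat; lra).
  assert (H64 : 64 / INR n * ((1/2)^k + (1/2)^(n-k)) <= 128 / INR n).
  { replace (128 / INR n) with (64 / INR n * 2) by (field; lra). apply Rmult_le_compat_l; lra. }
  assert (Hq : 0 <= INR k * (INR n - INR k) <= INR n * INR n / 4) by (split; [apply Rmult_le_pos; lra | pose proof (Rle_0_sqr (INR n - 2 * INR k)); unfold Rsqr in *; nra]).
  assert (Hc3 : 0 <= c3 n * (INR k * (INR n - INR k)) <= c3 n * (INR n * INR n / 4)).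
  { split. apply Rmult_le_pos; lra. apply Rmult_le_compat_l; lra. }
  assert (E : 140 / INR n = 24 / INR n / 2 + 128 / INR n) by (field; lra).
  rewrite E. apply Rabs_le. split; nra.
Qed.

Definition epsG (n : nat) (x : R) : R := Bern n (Gs n) x.

Lemma epsG_cv : unif_cv_zero01 epsG /\ unif_cv_zero01 (fun n x => - epsG n x).
Proof.
  assert (H : forall e, 0 < e -> exists N : nat, forall n, (N <= n)%nat -> forall x, in01 x -> Rabs (epsG n x) < e).
  { intros e He. destruct (archimed_cor1 (e / 140)) as [N [HN1 HN2]]. apply Rdiv_lt_0_compat; lra.
    exists (Nat.max N 7). intros n Hn x Hx.
    assert (HnN : INR N <= INR n) by (apply le_INR; lia).
    assert (0 < INR N) by (apply lt_0_INR; lia).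
    assert (Hn7 : (7 <= n)%nat) by lia.
    eapply Rle_lt_trans. apply Bern_bound. exact Hx. intros k Hk. apply Gs_bound; auto.
    assert (/ INR n <= / INR N) by (apply Rinv_le_contravar; lra).
    unfold Rdiv. replace e with (e / 140 * 140) by field. nra. }
  split; intros e He; destruct (H e He) as [N HN]; exists N; intros n Hn x Hx.
  apply HN; auto. rewrite Rabs_Ropp. apply HN; auto.
Qed.

Lemma cont_from_pt F : (forall x, continuity_pt F x) -> continuous_on01 F.
Proof.
  intros H x _ e He. destruct (H x e He) as [a [Ha Hb]]. exists a. split; auto.
  intros y _ Hy. destruct (Req_dec y x) as [E|E].
  - subst. rewrite Rminus_diag, Rabs_R0. auto.
  - apply Hb. split. split. exact I. auto. exact Hy.
Qed.

Lemma Bern_cont m u : continuous_on01 (Bern (S m) u).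
Proof.
  apply cont_from_pt. intros x. apply derivable_continuous_pt.
  exists (INR (S m) * Bern m (D1 u) x). apply Bern_deriv.
Qed.

Lemma ext_cont F H : (forall x, F x = H x) -> continuous_on01 H -> continuous_on01 F.
Proof. intros E C0 x Hx e He. destruct (C0 x Hx e He) as [d [Hd Hd2]]. exists d. split; auto.
  intros. rewrite !E. auto. Qed.

Lemma ext_convex F H : (forall x, F x = H x) -> convex_on01 H -> convex_on01 F.
Proof. intros E C0 x y t A B T. rewrite !E. auto. Qed.

Lemma concave_of_neg F : convex_on01 (fun x => - F x) -> concave_on01 F.
Proof. intros C0 x y t A B T. pose proof (C0 x y t A B T). simpl in H. lra. Qed.

Lemma C_neq n k : C n k <> 0.
Proof. pose proof (C_pos n k). lra. Qed.

Lemma Bround_eq g n f x : Bround g n f x = Bern n (fun k => g (f (INR k / INR n) * C n k) / C n k) x.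
Proof. unfold Bround, Bern. apply sum_eq. intros. pose proof (C_neq n i). field; auto. Qed.

Lemma sum_zero (F : nat -> R) N : (forall k, (k <= N)%nat -> F k = 0) -> sum_f_R0 F N = 0.
Proof. induction N; intros H; simpl. apply H; lia. rewrite IHN, H; try lra; try lia. intros; apply H; lia. Qed.

Lemma Bround_0 g m f : Bround g (S m) f 0 = g (f 0).
Proof.
  unfold Bround. rewrite decomp_sum by lia. simpl pred.
  rewrite sum_zero. 2:{ intros k _. simpl. ring. }
  rewrite C_n_0. replace (INR 0 / INR (S m)) with 0 by (simpl; unfold Rdiv; ring).
  rewrite Rminus_0_r, pow1. simpl. replace (f 0 * 1) with (f 0) by ring. ring.
Qed.

Lemma Bround_1 g m f : Bround g (S m) f 1 = g (f 1).
Proof.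
  unfold Bround. rewrite tech5.
  rewrite sum_zero. 2:{ intros k Hk. replace (S m - k)%nat with (S (m - k)) by lia. simpl. ring. }
  rewrite C_n_n. rewrite Nat.sub_diag. replace (INR (S m) / INR (S m)) with 1.
  rewrite pow1. simpl. ring_simplify. f_equal. ring.
  field. apply not_0_INR. lia.
Qed.

Lemma in01_k n k : (1 <= n)%nat -> (k <= n)%nat -> in01 (INR k / INR n).
Proof.
  intros. assert (0 < INR n) by (apply lt_0_INR; lia). assert (INR k <= INR n) by (apply le_INR; lia).
  pose proof (pos_INR k). split. apply Rmult_le_pos; auto. left; apply Rinv_0_lt_compat; auto.
  apply (Rmult_le_reg_r (INR n)); auto. unfold Rdiv. rewrite Rmult_assoc, Rinv_l by lra. lra.
Qed.

Lemma conv_seq f n : (1 <= n)%nat -> convex_on01 f -> forall j, (j + 2 <= n)%nat ->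
  0 <= f (INR j / INR n) - 2 * f (INR (S j) / INR n) + f (INR (S (S j)) / INR n).
Proof.
  intros Hn Cf j Hj. pose proof (Cf (INR j / INR n) (INR (S (S j)) / INR n) (1/2)
     (in01_k n j Hn ltac:(lia)) (in01_k n (S (S j)) Hn ltac:(lia)) ltac:(lra)).
  replace (1 / 2 * (INR j / INR n) + (1 - 1 / 2) * (INR (S (S j)) / INR n)) with (INR (S j) / INR n) in H.
  lra. rewrite !S_INR. field. apply not_0_INR. lia.
Qed.

Lemma conc_seq f n : (1 <= n)%nat -> concave_on01 f -> forall j, (j + 2 <= n)%nat ->
  0 <= - f (INR j / INR n) - 2 * - f (INR (S j) / INR n) + - f (INR (S (S j)) / INR n).
Proof.
  intros Hn Cf j Hj. pose proof (Cf (INR j / INR n) (INR (S (S j)) / INR n) (1/2)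
     (in01_k n j Hn ltac:(lia)) (in01_k n (S (S j)) Hn ltac:(lia)) ltac:(lra)).
  replace (1 / 2 * (INR j / INR n) + (1 - 1 / 2) * (INR (S (S j)) / INR n)) with (INR (S j) / INR n) in H.
  lra. rewrite !S_INR. field. apply not_0_INR. lia.
Qed.

Lemma abs_div1 a c : Rabs a <= 1 -> 0 < c -> Rabs (a / c) <= 1 / c.
Proof.
  intros. unfold Rdiv. rewrite Rabs_mult. rewrite (Rabs_pos_eq (/ c)).
  2: left; apply Rinv_0_lt_compat; auto. pose proof (Rinv_0_lt_compat c H0). nra.
Qed.

Section Gen.
Variable g : R -> R.
Hypothesis Hg1 : forall z, Rabs (z - g z) <= 1.
Hypothesis Hg2 : forall z, is_integer z -> g z = z.

Definition dd (n : nat) (f : R -> R) (k : nat) : R :=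
  (f (INR k / INR n) * C n k - g (f (INR k / INR n) * C n k)) / C n k.

Lemma dd_b1 n f : (7 <= n)%nat -> classX f -> forall k, (k <= n)%nat -> Rabs (dd n f k) <= 1 / INR n.
Proof.
  intros Hn [_ [H0 H1]] k Hk. unfold dd.
  assert (0 < INR n) by (apply lt_0_INR; lia).
  assert (0 < 1 / INR n) by (apply Rdiv_lt_0_compat; lra).
  destruct (Nat.eq_dec k 0) as [E|E].
  { subst. rewrite C_n_0. simpl INR. replace (0 / INR n) with 0 by (unfold Rdiv; ring).
    rewrite Rmult_1_r, Hg2 by auto. replace ((f 0 - f 0) / 1) with 0 by field. rewrite Rabs_R0. lra. }
  destruct (Nat.eq_dec k n) as [E'|E'].
  { subst. rewrite C_n_n. replace (INR n / INR n) with 1 by (field; lra).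
    rewrite Rmult_1_r, Hg2 by auto. replace ((f 1 - f 1) / 1) with 0 by field. rewrite Rabs_R0. lra. }
  eapply Rle_trans. apply abs_div1. apply Hg1. apply C_pos. apply inv_C_1; lia.
Qed.

Lemma dd_b3 n f : forall k, (3 <= k)%nat -> (k + 3 <= n)%nat -> Rabs (dd n f k) <= c3 n.
Proof.
  intros k H1 H2. unfold dd. eapply Rle_trans. apply abs_div1. apply Hg1. apply C_pos. apply inv_C_3; lia.
Qed.

Lemma gen : unif_asymp_preserves_convexity (Bround g).
Proof.
  split.
  - intros n f Hn [Hc [H0 H1]]. destruct n as [|m]; [lia|]. split; [|split].
    + eapply ext_cont. intros x. apply Bround_eq. apply Bern_cont.
    + rewrite Bround_0, Hg2; auto.
    + rewrite Bround_1, Hg2; auto.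
  - exists 7%nat, epsG, (fun n x => - epsG n x). split; [lia|].
    destruct epsG_cv as [E1 E2]. split; [auto|]. split; [auto|]. split.
    + intros f Hf Cf n Hn.
      apply (ext_convex _ (Bern n (fun k => (f (INR k / INR n) - dd n f k) + Gs n k))).
      { intros x. rewrite Bround_eq. unfold epsG. rewrite <- Bern_plus. unfold Bern, dd.
        apply sum_eq. intros i _. pose proof (C_neq n i). field; auto. }
      apply KEY; auto. intros; apply conv_seq; auto; lia.
      apply dd_b1; auto. apply dd_b3.
    + intros f Hf Cf n Hn. apply concave_of_neg.
      apply (ext_convex _ (Bern n (fun k => (- f (INR k / INR n) - - dd n f k) + Gs n k))).
      { intros x. rewrite Bround_eq. unfold epsG. rewrite <- Bern_opp, <- Bern_plus, <- Bern_opp. unfold Bern, dd.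
        apply sum_eq. intros i _. pose proof (C_neq n i). field; auto. }
      apply KEY; auto. intros; apply conc_seq; auto; lia.
      intros; rewrite Rabs_Ropp; apply dd_b1; auto. intros; rewrite Rabs_Ropp; apply dd_b3; auto.
Qed.
End Gen.

Lemma floor_ok1 z : Rabs (z - floorR z) <= 1.
Proof. unfold floorR. destruct (base_Int_part z). apply Rabs_le. lra. Qed.

Lemma floor_ok2 z : is_integer z -> floorR z = z.
Proof.
  intros [m ->]. unfold floorR. destruct (base_Int_part (IZR m)) as [A B].
  apply le_IZR in A. assert (IZR (m - 1) < IZR (Int_part (IZR m))) by (rewrite minus_IZR; simpl; lra).
  apply lt_IZR in H. f_equal. lia.
Qed.

Lemma rnd_ok1 rnd : nearest_int_choice rnd -> forall z, Rabs (z - IZR (rnd z)) <= 1.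
Proof. intros H z. pose proof (H z). lra. Qed.

Lemma rnd_ok2 rnd : nearest_int_choice rnd -> forall z, is_integer z -> IZR (rnd z) = z.
Proof.
  intros H z [m ->]. pose proof (H (IZR m)) as Hm. rewrite <- minus_IZR in Hm.
  apply abs_bd in Hm. destruct Hm as [A B].
  assert (IZR (-1) < IZR (m - rnd (IZR m))) by (simpl; lra).
  assert (IZR (m - rnd (IZR m)) < IZR 1) by (simpl; lra).
  apply lt_IZR in H0. apply lt_IZR in H1. f_equal. lia.
Qed.

Theorem theorem1p6 :
  unif_asymp_preserves_convexity Btilde /\
  (forall rnd : R -> Z, nearest_int_choice rnd ->
     unif_asymp_preserves_convexity (Bhat rnd)).
Proof.
  split.
  - exact (gen floorR floor_ok1 floor_ok2).
  - intros rnd H. exact (gen (fun a => IZR (rnd a)) (rnd_ok1 rnd H) (rnd_ok2 rnd H)).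
Qed.
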